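(* Let $\mathbb{A}$ be a 2-category and $p:e\to b$ a 1-cell such that $\mathbb{A}$ has the two-dimensional cokernel diagram of $p$, a right Kan extension $(t,\gamma)$ of $p$ along $p$ exists, and it is preserved by $\delta^0:b\to b\uparrow_pb$. Let $\ell:b\uparrow_pb\to b$ be the unique 1-cell with $\ell\delta^0=\mathrm{id}_b$, $\ell\delta^1=t$, $\mathrm{id}_\ell\ast\alpha=\gamma$; then $\ell\dashv\delta^0$ with counit $\mathrm{id}_{\mathrm{id}_b}$, and let $\bar\eta:\mathrm{id}_{b\uparrow_pb}\Rightarrow\delta^0\ell$ be the unit of this adjunction. Then there exist a 1-cell $\bar\ell:b\uparrow_pb\uparrow_pb\to b$ and a 2-cell $\bar{\bar\eta}:\mathrm{id}_{b\uparrow_pb\uparrow_pb}\Rightarrow D^0\delta^0\bar\ell$ such that $\bar\ell\dashv D^0\delta^0$ is an adjunction with counit $\mathrm{id}_{\mathrm{id}_b}$ and unit $\bar{\bar\eta}$, and $$\bar\ell D^2=t\ell,\qquad \bar\ell D^0=\ell,\qquad \bar{\bar\eta}\ast\mathrm{id}_{D^0}=\mathrm{id}_{D^0}\ast\bar\eta .$$ Furthermore $\bar{\bar\eta}\ast\mathrm{id}_{D^2}$ equals the 2-cell $\bar{\bar\eta}_2:=(\mathrm{id}_{D^0}\ast\bar\eta\ast\mathrm{id}_{\delta^1\ell})\cdot(\mathrm{id}_{D^2}\ast\bar\eta): D^2\Rightarrow D^2\delta^0\ell=D^0\delta^1\ell\Rightarrow D^0\delta^0\ell\delta^1\ell=D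^0\delta^0t\ell$.
   Context: A 2-category is a $\mathbf{Cat}$-enriched category; composition of 1-cells is juxtaposition, vertical composition of 2-cells is $\cdot$, horizontal composition is $\ast$, $\mathrm{id}_f$ is the identity 2-cell on $f$. An adjunction $l\dashv r$ with counit $\varepsilon:lr\Rightarrow\mathrm{id}$ and unit $\eta:\mathrm{id}\Rightarrow rl$ satisfies the triangle identities. Opcomma object of $p$ along itself: an object $b\uparrow_p b$ with 1-cells $\delta^0,\delta^1:b\to b\uparrow_p b$ and a 2-cell $\alpha:\delta^1p\Rightarrow\delta^0p$ such that for every object $y$ the functor $h\mapsto(h\delta^0,h\delta^1,\mathrm{id}_h\ast\alpha)$, $\xi\mapsto(\xi\ast\mathrm{id}_{\delta^0},\xi\ast\mathrm{id}_{\delta^1})$ is an isomorphism from $\mathbb{A}(b\uparrow_p b,y)$ onto the category of triples $(h_0,h_1:b\to y,\ \beta:h_1p\Rightarrow h_0p)$ with morphisms pairs of 2-cells $(\xi_0:h_0\Rightarrow h_0',\xi_1:h_1\Rightarrow h_1')$ satisfying $(\xi_0\ast\mathrm{id}_p)\cdot\beta=\beta'\cdot(\xi_1\ast\mathrm{id}_p)$. Two-dimensional pushout of a span $f_0:c\to c_0$, $f_1:c\to c_1$: an object $P$ with $q_0:c_0\to P$, $q_1:c_1\to P$, $q_0f_0=q_1f_1$, such that for every $y$, $k\mapsto(kq_0,kq_1)$ is an isomorphism from $\mathbb{A}(P,y)$ onto the category of pairs $(k_0,k_1)$ with $k_0f_0=k_1f_1$, whose morphisms are pairs of 2-cells $(\xi_0,\xi_1)$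 with $\xi_0\ast\mathrm{id}_{f_0}=\xi_1\ast\mathrm{id}_{f_1}$. $\mathbb{A}$ has the two-dimensional cokernel diagram of $p$ if it has an opcomma object $b\uparrow_p b$ of $p$ along itself and a two-dimensional pushout $b\uparrow_pb\uparrow_pb$ of the span $(\delta^0,\delta^1)$, with 1-cells $D^0,D^2:b\uparrow_pb\to b\uparrow_pb\uparrow_pb$ satisfying $D^2\delta^0=D^0\delta^1$. Right Kan extension of $f:z\to y$ along $g:z\to x$: a pair $(r:x\to y,\gamma:rg\Rightarrow f)$ such that for each $k:x\to y$, $\beta\mapsto\gamma\cdot(\beta\ast\mathrm{id}_g)$ is a bijection from 2-cells $k\Rightarrow r$ to 2-cells $kg\Rightarrow f$. A 1-cell $d:y\to y'$ preserves it if $(dr,\mathrm{id}_d\ast\gamma)$ is a right Kan extension of $df$ along $g$. *)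

(* Defs.v *)
(* A strict 2-category (= Cat-enriched category), presented "globularly":
   a type of objects, a type of 1-cells with source/target, a type of
   2-cells with domain/codomain 1-cells, and total composition operations
   whose axioms are required only on composable arguments.  This avoids
   transport along equalities of 1-cells (e.g. l delta0 = id_b). *)

Set Implicit Arguments.

Record TwoCat := {
  ob : Type;
  cell1 : Type;
  cell2 : Type;
  src : cell1 -> ob;
  tgt : cell1 -> ob;
  id1 : ob -> cell1;
  (* comp1 g f = g f (juxtaposition: first f, then g) *)
  comp1 : cell1 -> cell1 -> cell1;
  dom : cell2 -> cell1;
  cod : cell2 -> cell1;
  id2 : cell1 -> cell2;
  (* vcomp b a = b . a (first a, then b) *)
  vcomp : cell2 -> cell2 -> cell2;
  (* hcomp b a = b * a, a : f => f' (f,f' : x -> y), b : g => g' (g,g' : y -> z) *)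
  hcomp : cell2 -> cell2 -> cell2;

  src_id1 : forall a, src (id1 a) = a;
  tgt_id1 : forall a, tgt (id1 a) = a;
  src_comp1 : forall g f, src g = tgt f -> src (comp1 g f) = src f;
  tgt_comp1 : forall g f, src g = tgt f -> tgt (comp1 g f) = tgt g;
  comp1_assoc : forall h g f, src h = tgt g -> src g = tgt f ->
    comp1 h (comp1 g f) = comp1 (comp1 h g) f;
  comp1_id_l : forall f, comp1 (id1 (tgt f)) f = f;
  comp1_id_r : forall f, comp1 f (id1 (src f)) = f;

  src_dom_cod : forall a, src (dom a) = src (cod a);
  tgt_dom_cod : forall a, tgt (dom a) = tgt (cod a);
  dom_id2 : forall f, dom (id2 f) = f;
  cod_id2 : forall f, cod (id2 f) = f;
  dom_vcomp : forall b a, dom b = cod a -> dom (vcomp b a) = dom a;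
  cod_vcomp : forall b a, dom b = cod a -> cod (vcomp b a) = cod b;
  vcomp_assoc : forall c b a, dom c = cod b -> dom b = cod a ->
    vcomp c (vcomp b a) = vcomp (vcomp c b) a;
  vcomp_id_l : forall a, vcomp (id2 (cod a)) a = a;
  vcomp_id_r : forall a, vcomp a (id2 (dom a)) = a;

  dom_hcomp : forall b a, src (dom b) = tgt (dom a) ->
    dom (hcomp b a) = comp1 (dom b) (dom a);
  cod_hcomp : forall b a, src (dom b) = tgt (dom a) ->
    cod (hcomp b a) = comp1 (cod b) (cod a);
  hcomp_assoc : forall c b a, src (dom c) = tgt (dom b) ->
    src (dom b) = tgt (dom a) ->
    hcomp c (hcomp b a) = hcomp (hcomp c b) a;
  hcomp_id_l : forall a, hcomp (id2 (id1 (tgt (dom a)))) a = a;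
  hcomp_id_r : forall a, hcomp a (id2 (id1 (src (dom a)))) = a;
  hcomp_id2 : forall g f, src g = tgt f ->
    hcomp (id2 g) (id2 f) = id2 (comp1 g f);
  interchange : forall b' b a' a,
    dom b' = cod b -> dom a' = cod a -> src (dom b) = tgt (dom a) ->
    hcomp (vcomp b' b) (vcomp a' a) = vcomp (hcomp b' a') (hcomp b a)
}.

Arguments src {_} _.  Arguments tgt {_} _.  Arguments id1 {_} _.
Arguments comp1 {_} _ _.  Arguments dom {_} _.  Arguments cod {_} _.
Arguments id2 {_} _.  Arguments vcomp {_} _ _.  Arguments hcomp {_} _ _.

Section Defs.
Context {A : TwoCat}.

Definition hom1 (f : cell1 A) (x y : ob A) : Prop := src f = x /\ tgt f = y.
Definition hom2 (a : cell2 A) (f g : cell1 A) : Prop := dom a = f /\ cod a = g.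

(* Opcomma object (X, d0, d1, al : d1 p => d0 p) of p : e -> b along itself:
   for every y, the functor A(X,y) -> triples, h |-> (h d0, h d1, id_h * al),
   xi |-> (xi * id_d0, xi * id_d1), is an isomorphism of categories, i.e.
   bijective on objects and on each hom-set. *)
Definition is_opcomma (p : cell1 A) (e b X : ob A) (d0 d1 : cell1 A)
    (al : cell2 A) : Prop :=
  hom1 d0 b X /\ hom1 d1 b X /\ hom2 al (comp1 d1 p) (comp1 d0 p) /\
  forall y : ob A,
    (forall h0 h1 be, hom1 h0 b y -> hom1 h1 b y ->
       hom2 be (comp1 h1 p) (comp1 h0 p) ->
       exists! h, hom1 h X y /\ comp1 h d0 = h0 /\ comp1 h d1 = h1 /\
                  hcomp (id2 h) al = be) /\
    (forall h h' xi0 xi1, hom1 h X y -> hom1 h' X y ->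
       hom2 xi0 (comp1 h d0) (comp1 h' d0) ->
       hom2 xi1 (comp1 h d1) (comp1 h' d1) ->
       vcomp (hcomp xi0 (id2 p)) (hcomp (id2 h) al)
         = vcomp (hcomp (id2 h') al) (hcomp xi1 (id2 p)) ->
       exists! xi, hom2 xi h h' /\ hcomp xi (id2 d0) = xi0 /\
                   hcomp xi (id2 d1) = xi1).

Definition is_pushout2 (c c0 c1 : ob A) (f0 f1 : cell1 A) (P : ob A)
    (q0 q1 : cell1 A) : Prop :=
  hom1 q0 c0 P /\ hom1 q1 c1 P /\ comp1 q0 f0 = comp1 q1 f1 /\
  forall y : ob A,
    (forall k0 k1, hom1 k0 c0 y -> hom1 k1 c1 y -> comp1 k0 f0 = comp1 k1 f1 ->
       exists! k, hom1 k P y /\ comp1 k q0 = k0 /\ comp1 k q1 = k1) /\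
    (forall k k' xi0 xi1, hom1 k P y -> hom1 k' P y ->
       hom2 xi0 (comp1 k q0) (comp1 k' q0) ->
       hom2 xi1 (comp1 k q1) (comp1 k' q1) ->
       hcomp xi0 (id2 f0) = hcomp xi1 (id2 f1) ->
       exists! xi, hom2 xi k k' /\ hcomp xi (id2 q0) = xi0 /\
                   hcomp xi (id2 q1) = xi1).

Definition has_cokernel_diagram (p : cell1 A) (e b X : ob A)
    (d0 d1 : cell1 A) (al : cell2 A) (P : ob A) (D0 D2 : cell1 A) : Prop :=
  is_opcomma p e b X d0 d1 al /\ is_pushout2 b X X d0 d1 P D2 D0.

Definition is_rke (z x y : ob A) (f g r : cell1 A) (ga : cell2 A) : Prop :=
  hom1 r x y /\ hom2 ga (comp1 r g) f /\
  forall k, hom1 k x y ->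
    forall be', hom2 be' (comp1 k g) f ->
      exists! be, hom2 be k r /\ vcomp ga (hcomp be (id2 g)) = be'.

Definition preserves_rke (z x y y' : ob A) (f g r : cell1 A) (ga : cell2 A)
    (d : cell1 A) : Prop :=
  hom1 d y y' /\
  is_rke z x y' (comp1 d f) g (comp1 d r) (hcomp (id2 d) ga).

Definition is_adjunction (x y : ob A) (l r : cell1 A) (ep et : cell2 A) : Prop :=
  hom1 l x y /\ hom1 r y x /\
  hom2 ep (comp1 l r) (id1 y) /\ hom2 et (id1 x) (comp1 r l) /\
  vcomp (hcomp ep (id2 l)) (hcomp (id2 l) et) = id2 l /\
  vcomp (hcomp (id2 r) ep) (hcomp et (id2 r)) = id2 r.

End Defs.

(* Main.v *)
Require Import Defs.
Section H.
Context {A : TwoCat}.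
Definition C2 (a : cell2 A) x y := hom1 (dom a) x y.
Lemma h1_comp (g f : cell1 A) x y z : hom1 g y z -> hom1 f x y -> hom1 (comp1 g f) x z.
Proof. intros [Hg1 Hg2] [Hf1 Hf2]; split; [rewrite src_comp1|rewrite tgt_comp1]; congruence. Qed.
Lemma h1_id (x : ob A) : hom1 (id1 x) x x.
Proof. split; [apply src_id1|apply tgt_id1]. Qed.
Lemma st (h g : cell1 A) x y z : hom1 h y z -> hom1 g x y -> src h = tgt g.
Proof. intros [] []; congruence. Qed.
Lemma srcof (f : cell1 A) x y : hom1 f x y -> src f = x.
Proof. intros []; auto. Qed.
Lemma tgtof (f : cell1 A) x y : hom1 f x y -> tgt f = y.
Proof. intros []; auto. Qed.
Lemma C2_dom a x y : C2 a x y -> hom1 (dom a) x y.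
Proof. auto. Qed.
Lemma C2_cod a x y : C2 a x y -> hom1 (cod a) x y.
Proof. intros []; split; [rewrite <- src_dom_cod|rewrite <- tgt_dom_cod]; auto. Qed.
Lemma C2_id2 f x y : hom1 f x y -> C2 (id2 f) x y.
Proof. unfold C2; rewrite dom_id2; auto. Qed.
Lemma C2_h b a x y z : C2 b y z -> C2 a x y -> C2 (hcomp b a) x z.
Proof. unfold C2; intros H1 H2; rewrite dom_hcomp. eapply h1_comp; eauto.
  eapply st; eauto. Qed.
Lemma C2_v b a x y : C2 a x y -> dom b = cod a -> C2 (vcomp b a) x y.
Proof. unfold C2; intros H1 H2; rewrite dom_vcomp; auto. Qed.
Lemma hidl (a : cell2 A) y : tgt (dom a) = y -> hcomp (id2 (id1 y)) a = a.
Proof. intros <-; apply hcomp_id_l. Qed.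
Lemma hidr (a : cell2 A) x : src (dom a) = x -> hcomp a (id2 (id1 x)) = a.
Proof. intros <-; apply hcomp_id_r. Qed.
Lemma vidl (a : cell2 A) f : cod a = f -> vcomp (id2 f) a = a.
Proof. intros <-; apply vcomp_id_l. Qed.
Lemma vidr (a : cell2 A) f : dom a = f -> vcomp a (id2 f) = a.
Proof. intros <-; apply vcomp_id_r. Qed.
Lemma cidl (f : cell1 A) y : tgt f = y -> comp1 (id1 y) f = f.
Proof. intros <-; apply comp1_id_l. Qed.
Lemma cidr (f : cell1 A) x : src f = x -> comp1 f (id1 x) = f.
Proof. intros <-; apply comp1_id_r. Qed.
Lemma wdist h (b a : cell2 A) : dom b = cod a -> src h = tgt (dom a) ->
  hcomp (id2 h) (vcomp b a) = vcomp (hcomp (id2 h) b) (hcomp (id2 h) a).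
Proof. intros H1 H2.
  pose proof (vcomp_id_l A (id2 h)) as E. rewrite cod_id2 in E.
  transitivity (hcomp (vcomp (id2 h) (id2 h)) (vcomp b a)); [rewrite E; reflexivity|].
  apply interchange; rewrite ?dom_id2, ?cod_id2; auto. Qed.
Lemma wdistr h (b a : cell2 A) : dom b = cod a -> src (dom a) = tgt h ->
  hcomp (vcomp b a) (id2 h) = vcomp (hcomp b (id2 h)) (hcomp a (id2 h)).
Proof. intros H1 H2.
  pose proof (vcomp_id_l A (id2 h)) as E. rewrite cod_id2 in E.
  transitivity (hcomp (vcomp b a) (vcomp (id2 h) (id2 h))); [rewrite E; reflexivity|].
  apply interchange; rewrite ?dom_id2, ?cod_id2; auto. Qed.
Lemma aeq (g f x r : cell1 A) : src g = tgt f -> src f = tgt x -> comp1 g f = r ->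
  comp1 g (comp1 f x) = comp1 r x.
Proof. intros H1 H2 <-. apply comp1_assoc; auto. Qed.
Lemma mkC2 a x y : hom1 (dom a) x y -> C2 a x y.
Proof. auto. Qed.
End H.
Global Opaque C2.
Global Hint Resolve h1_comp h1_id st srcof tgtof C2_dom C2_cod C2_id2 C2_h C2_v : cat.
Ltac ty := solve [eauto 12 with cat].
Ltac dc := repeat first [rewrite dom_id2 | rewrite cod_id2 | rewrite dom_hcomp by ty | rewrite cod_hcomp by ty].
Ltac n1 := repeat first [ rewrite <- comp1_assoc by ty | rewrite cidl by ty | rewrite cidr by ty ].
Ltac rdc := repeat match goal with
  | H : dom ?a = _ |- context [dom ?a] => rewrite H
  | H : cod ?a = _ |- context [cod ?a] => rewrite H end.
Ltac rw1 := repeat (match goal with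
 | H : comp1 ?g ?f = ?r |- context [comp1 ?g (comp1 ?f ?x)] => rewrite (aeq g f x r) by (ty || exact H)
 | H : comp1 ?g ?f = ?r |- context [comp1 ?g ?f] => rewrite H
 end; n1).
Ltac eq1 := repeat progress (dc; rdc; n1; rw1); reflexivity.
Theorem proposition4p4 (A : TwoCat) (e b X P : ob A)
    (p d0 d1 D0 D2 t l : cell1 A) (al ga : cell2 A)
    (Hp : hom1 p e b)
    (Hcok : has_cokernel_diagram p e b X d0 d1 al P D0 D2)
    (Hrke : is_rke e b b p p t ga)
    (Hpres : preserves_rke e b b X p p t ga d0)
    (Hl : hom1 l X b /\ comp1 l d0 = id1 b /\ comp1 l d1 = t /\
          hcomp (id2 l) al = ga) :
  (exists et, is_adjunction X b l d0 (id2 (id1 b)) et) /\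
  forall etb, is_adjunction X b l d0 (id2 (id1 b)) etb ->
    exists lb etbb,
      is_adjunction P b lb (comp1 D0 d0) (id2 (id1 b)) etbb /\
      comp1 lb D2 = comp1 t l /\
      comp1 lb D0 = l /\
      hcomp etbb (id2 D0) = hcomp (id2 D0) etb /\
      hcomp etbb (id2 D2) =
        vcomp (hcomp (hcomp (id2 D0) etb) (id2 (comp1 d1 l)))
              (hcomp (id2 D2) etb).
Proof.
  destruct Hcok as [[Hd0 [Hd1 [[Dal Cal] Hop]]] [HD2 [HD0 [ED Hpo]]]].
  destruct Hrke as [Ht [[Dga Cga] Hrk]].
  destruct Hpres as [_ [_ [[Dg0 Cg0] Hrk0]]].
  destruct Hl as [Hl [El0 [El1 Elal]]].
  assert (Cal2 : C2 al e X).
  { apply mkC2; rewrite Dal; ty. }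
  assert (Cga2 : C2 ga e b).
  { apply mkC2; rewrite Dga; ty. }
  destruct (Hrk0 d1 Hd1 al (conj Dal Cal)) as [be [[[Dbe Cbe] Ebe] _]].
  assert (Cbe2 : C2 be b X).
  { apply mkC2; rewrite Dbe; ty. }
  assert (Key : forall be', dom be' = d1 -> cod be' = comp1 d0 t ->
     vcomp (hcomp (id2 d0) ga) (hcomp be' (id2 p)) = al ->
     hcomp (id2 l) be' = id2 t).
  { intros be' Dbe' Cbe' Heq.
    assert (Cbe'2 : C2 be' b X) by (apply mkC2; rewrite Dbe'; ty).
    destruct (Hrk t Ht ga (conj Dga Cga)) as [u [_ Hu]].
    assert (E1: hcomp (id2 l) al = vcomp ga (hcomp (hcomp (id2 l) be') (id2 p))).
    { rewrite <- Heq. rewrite wdist by (eq1 || ty). rewrite hcomp_assoc by ty.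
      rewrite hcomp_id2 by ty. rewrite El0. rewrite hidl by ty.
      rewrite hcomp_assoc by ty. reflexivity. }
    rewrite Elal in E1.
    transitivity u; [symmetry|]; apply Hu; split.
    - split; eq1.
    - auto.
    - split; eq1.
    - rewrite hcomp_id2 by ty. apply vidr. exact Dga. }
  assert (Uni : forall xi, hom2 xi l l -> hcomp xi (id2 d0) = id2 (id1 b) ->
     hcomp xi (id2 d1) = id2 t -> xi = id2 l).
  { intros xi [Dxi Cxi] H0 H1.
    destruct (proj2 (Hop b) l l (id2 (id1 b)) (id2 t)) as [u [_ Hu]];
      [ty|ty|split; eq1|split; eq1| |].
    { rewrite Elal. rewrite !hcomp_id2 by ty. rewrite vidr by exact Dga.
      rewrite vidl by eq1. reflexivity. }
    transitivity u; [symmetry|]; apply Hu; split; try (split; eq1).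
    - split; auto.
    - rewrite !hcomp_id2 by ty. rewrite El0, El1. split; reflexivity. }
  destruct (proj2 (Hop X) (id1 X) (comp1 d0 l) (id2 d0) be) as [et [[[Det Cet] [Et0 Et1]] _]];
    [ty|ty|split; eq1|split; eq1| |].
  { rewrite hcomp_id2 by ty. rewrite hidl by ty. rewrite vidl by exact Cal.
    rewrite <- (hcomp_id2 A d0 l) by ty. rewrite <- hcomp_assoc by ty.
    rewrite Elal. symmetry; exact Ebe. }
  assert (Cet2 : C2 et X X) by (apply mkC2; rewrite Det; ty).
  split.
  { exists et. split; [ty|split; [ty|split; [split; eq1|split; [split; assumption|split]]]].
    - assert (E1 : hcomp (id2 l) et = id2 l).
      { apply Uni.
        - split; eq1.
        - rewrite <- hcomp_assoc by ty. rewrite Et0, hcomp_id2, El0 by ty. reflexivity.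
        - rewrite <- hcomp_assoc by ty. rewrite Et1. apply Key; auto. }
      rewrite E1, hcomp_id2 by ty. rewrite cidl by ty. apply vidl, cod_id2.
    - rewrite Et0, hcomp_id2 by ty. rewrite cidr by ty. apply vidl, cod_id2. }
  intros etb [_ [_ [_ [[Detb Cetb] [T1 T2]]]]].
  assert (Cetb2 : C2 etb X X) by (apply mkC2; rewrite Detb; ty).
  rewrite hcomp_id2 in T1 by ty. rewrite cidl in T1 by ty. rewrite vidl in T1 by eq1.
  rewrite hcomp_id2 in T2 by ty. rewrite cidr in T2 by ty. rewrite vidl in T2 by eq1.
  destruct (proj1 (Hpo b) (comp1 t l) l) as [lb [[Hlb [Elb2 Elb0]] _]]; [ty|ty|eq1|].
  assert (EOI : dom (hcomp (hcomp (id2 D0) etb) (id2 (comp1 d1 l))) = cod (hcomp (id2 D2) etb)) by eq1.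
  destruct (proj2 (Hpo P) (id1 P) (comp1 (comp1 D0 d0) lb)
     (vcomp (hcomp (hcomp (id2 D0) etb) (id2 (comp1 d1 l))) (hcomp (id2 D2) etb))
     (hcomp (id2 D0) etb)) as [etbb [[[Detbb Cetbb] [Eb2 Eb0]] _]];
    [ty|ty| | split; eq1 | |].
  { split; [rewrite dom_vcomp by exact EOI|rewrite cod_vcomp by exact EOI]; eq1. }
  { rewrite wdistr by (exact EOI || ty).
    rewrite <- (hcomp_assoc A (id2 D2) etb (id2 d0)) by ty. rewrite T2. rewrite hcomp_id2 by ty.
    rewrite <- (hcomp_assoc A (hcomp (id2 D0) etb) (id2 (comp1 d1 l)) (id2 d0)) by ty.
    rewrite (hcomp_id2 A (comp1 d1 l) d0) by ty.
    assert (Ex : comp1 (comp1 d1 l) d0 = d1) by eq1. rewrite Ex.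
    apply vidr. eq1. }
  assert (Cetbb2 : C2 etbb P P) by (apply mkC2; rewrite Detbb; ty).
  exists lb, etbb.
  split; [|split; [exact Elb2|split; [exact Elb0|split; assumption]]].
  split; [exact Hlb|split; [ty|split; [split; eq1|split; [split; assumption|split]]]].
  - assert (HU : hcomp (id2 lb) etbb = id2 lb).
    { destruct (proj2 (Hpo b) lb lb (id2 (comp1 t l)) (id2 l)) as [u [_ Hu]];
        [ty|ty|split; eq1|split; eq1| |].
      { rewrite !hcomp_id2 by ty. f_equal; eq1. }
      transitivity u; [symmetry|]; apply Hu; split; try (split; eq1).
      - split.
        + rewrite <- hcomp_assoc by ty. rewrite Eb2. rewrite wdist by (exact EOI || ty).
          rewrite (hcomp_assoc A (id2 lb) (id2 D2) etb) by ty.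
          rewrite (hcomp_id2 A lb D2) by ty. rewrite Elb2.
          rewrite <- (hcomp_id2 A t l) by ty.
          rewrite <- (hcomp_assoc A (id2 t) (id2 l) etb) by ty. rewrite T1.
          rewrite (hcomp_id2 A t l) by ty.
          rewrite (hcomp_assoc A (id2 lb) (hcomp (id2 D0) etb)) by ty.
          rewrite (hcomp_assoc A (id2 lb) (id2 D0) etb) by ty.
          rewrite (hcomp_id2 A lb D0) by ty. rewrite Elb0. rewrite T1.
          rewrite hcomp_id2 by ty.
          assert (Ex : comp1 l (comp1 d1 l) = comp1 t l) by eq1. rewrite Ex.
          apply vidl, cod_id2.
        + rewrite <- hcomp_assoc by ty. rewrite Eb0.
          rewrite (hcomp_assoc A (id2 lb) (id2 D0) etb) by ty.
          rewrite (hcomp_id2 A lb D0) by ty. rewrite Elb0. exact T1.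
      - rewrite !hcomp_id2 by ty. rewrite Elb2, Elb0. split; reflexivity. }
    rewrite HU, hcomp_id2 by ty. rewrite cidl by ty. apply vidl, cod_id2.
  - assert (HU : hcomp etbb (id2 (comp1 D0 d0)) = id2 (comp1 D0 d0)).
    { rewrite <- (hcomp_id2 A D0 d0) by ty. rewrite hcomp_assoc by ty. rewrite Eb0.
      rewrite <- hcomp_assoc by ty. rewrite T2. reflexivity. }
    rewrite HU, hcomp_id2 by ty. rewrite cidr by ty. apply vidl, cod_id2.
Qed.
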